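(* For every $\phi\in\mathcal{L}_{\Box\!\!\rightarrow}$, if $\vdash\phi$ in $\mathbb{N}4\mathbb{CK}$, then $\phi\in\mathsf{N4CK}$ (i.e. $\phi$ is verified at every point of every Nelsonian conditional model).
   Context: $\mathcal{L}_{\Box\!\!\rightarrow}$ is built from propositional variables with $\wedge,\vee,\to$, strong negation $\sim$, and a binary would-conditional $\Box\!\!\rightarrow$; $\phi\Diamond\!\!\rightarrow\psi$ abbreviates $\sim(\phi\Box\!\!\rightarrow\sim\psi)$. Semantics: a Nelsonian conditional model is $\mathcal{M}=(W,\leq,R,V^+,V^-)$ with $W\neq\emptyset$, $\leq$ a preorder, $V^\pm$ assigning $\leq$-upward-closed sets to variables, $R\subseteq W\times(\mathcal{P}(W)\times\mathcal{P}(W))\times W$ (write $R_{(X,Y)}(w,v)$) such that for all $X,Y$: (c1) $w\leq w'$ and $R_{(X,Y)}(w,v)$ imply $R_{(X,Y)}(w',v')$ for some $v'\geq v$; (c2) $R_{(X,Y)}(w,v)$ and $v\leq v'$ imply $R_{(X,Y)}(w',v')$ for some $w'\geq w$. Verification $\models^+$ / falsification $\models^-$: atoms by $V^\pm$; $\wedge$ verified iff both verified, falsified iff one falsified; $\vee$ dually; $\sim$ swaps $\models^+,\models^-$; $w\models^+\psi\to\chi$ iff for all $v\geq w$, $v\models^+\psi$ implies $v\models^+\chi$; $w\models^-\psi\to\chi$ iff $w\models^+\psi$ and $w\models^-\chi$; $w\models^+\psi\Box\!\!\rightarrow\chi$ iff for all $v\geq w$ and $u$ with $R_{\|\psi\|}(v,u)$,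 $u\models^+\chi$; $w\models^-\psi\Box\!\!\rightarrow\chi$ iff some $u$ has $R_{\|\psi\|}(w,u)$ and $u\models^-\chi$; $\|\psi\|=(\{w\mid w\models^+\psi\},\{w\mid w\models^-\psi\})$. Abbreviations: $\leftrightarrow$ is mutual $\to$; $\phi\Rightarrow\psi:=(\phi\to\psi)\wedge(\sim\psi\to\sim\phi)$; $\phi\Leftrightarrow\psi:=(\phi\Rightarrow\psi)\wedge(\psi\Rightarrow\phi)$. $\mathbb{N}4\mathbb{CK}$: modus ponens; positive intuitionistic axiom schemes; $\sim\sim\phi\leftrightarrow\phi$, $\sim(\phi\wedge\psi)\leftrightarrow(\sim\phi\vee\sim\psi)$, $\sim(\phi\vee\psi)\leftrightarrow(\sim\phi\wedge\sim\psi)$, $\sim(\phi\to\psi)\leftrightarrow(\phi\wedge\sim\psi)$; (A1) $((\phi\Box\!\!\rightarrow\psi)\wedge(\phi\Box\!\!\rightarrow\chi))\Leftrightarrow(\phi\Box\!\!\rightarrow(\psi\wedge\chi))$; (A2) $(\sim(\phi\Box\!\!\rightarrow\psi)\wedge(\phi\Box\!\!\rightarrow\chi))\to\sim(\phi\Box\!\!\rightarrow(\psi\vee\sim\chi))$; (A3) $((\phi\Diamond\!\!\rightarrow\psi)\to(\phi\Box\!\!\rightarrow\chi))\to(\phi\Box\!\!\rightarrow(\psi\to\chi))$; (A4) $\phi\Box\!\!\rightarrow(\psi\to\psi)$; rules: from $\phi\Leftrightarrow\psi$ infer $(\phi\Box\!\!\rightarrow\chi)\Leftrightarrow(\psi\Box\!\!\rightarrow\chi)$;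 from $\phi\leftrightarrow\psi$ infer $(\chi\Box\!\!\rightarrow\phi)\leftrightarrow(\chi\Box\!\!\rightarrow\psi)$; from $\sim\phi\leftrightarrow\sim\psi$ infer $\sim(\chi\Box\!\!\rightarrow\phi)\leftrightarrow\sim(\chi\Box\!\!\rightarrow\psi)$. *)

(* Defs.v *)
Inductive form : Type :=
| Var : nat -> form
| And : form -> form -> form
| Or : form -> form -> form
| Imp : form -> form -> form
| SNeg : form -> form
| Box : form -> form -> form.

Definition Diam (a b : form) : form := SNeg (Box a (SNeg b)).
Definition Iff (a b : form) : form := And (Imp a b) (Imp b a).
Definition SImp (a b : form) : form := And (Imp a b) (Imp (SNeg b) (SNeg a)).
Definition SIff (a b : form) : form := And (SImp a b) (SImp b a).

(* Nelsonian conditional models.  Subsets of W are predicates W -> Prop;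
   R is indexed by pairs (X, Y) of subsets, written here as R X Y w v. *)
Record model : Type := {
  W : Type;
  W_inhabited : inhabited W;
  le : W -> W -> Prop;
  le_refl : forall w, le w w;
  le_trans : forall u v w, le u v -> le v w -> le u w;
  Vp : nat -> W -> Prop;
  Vm : nat -> W -> Prop;
  Vp_up : forall p w w', le w w' -> Vp p w -> Vp p w';
  Vm_up : forall p w w', le w w' -> Vm p w -> Vm p w';
  R : (W -> Prop) -> (W -> Prop) -> W -> W -> Prop;
  R_c1 : forall X Y w w' v, le w w' -> R X Y w v ->
           exists v', le v v' /\ R X Y w' v';
  R_c2 : forall X Y w v v', R X Y w v -> le v v' ->
           exists w', le w w' /\ R X Y w' v'
}.

Fixpoint ver (M : model) (phi : form) : W M -> Prop :=
  match phi with
  | Var p => fun w => Vp M p w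
  | And a b => fun w => ver M a w /\ ver M b w
  | Or a b => fun w => ver M a w \/ ver M b w
  | Imp a b => fun w => forall v, le M w v -> ver M a v -> ver M b v
  | SNeg a => fun w => fal M a w
  | Box a b => fun w => forall v u, le M w v -> R M (ver M a) (fal M a) v u ->
                                    ver M b u
  end
with fal (M : model) (phi : form) : W M -> Prop :=
  match phi with
  | Var p => fun w => Vm M p w
  | And a b => fun w => fal M a w \/ fal M b w
  | Or a b => fun w => fal M a w /\ fal M b w
  | Imp a b => fun w => ver M a w /\ fal M b w
  | SNeg a => fun w => ver M a w
  | Box a b => fun w => exists u, R M (ver M a) (fal M a) w u /\ fal M b u
  end.

Definition N4CK_valid (phi : form) : Prop :=
  forall (M : model) (w : W M), ver M phi w.

Inductive prov : form -> Prop :=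
| ax_K : forall a b, prov (Imp a (Imp b a))
| ax_S : forall a b c, prov (Imp (Imp a (Imp b c)) (Imp (Imp a b) (Imp a c)))
| ax_andE1 : forall a b, prov (Imp (And a b) a)
| ax_andE2 : forall a b, prov (Imp (And a b) b)
| ax_andI : forall a b, prov (Imp a (Imp b (And a b)))
| ax_orI1 : forall a b, prov (Imp a (Or a b))
| ax_orI2 : forall a b, prov (Imp b (Or a b))
| ax_orE : forall a b c, prov (Imp (Imp a c) (Imp (Imp b c) (Imp (Or a b) c)))
| ax_nn : forall a, prov (Iff (SNeg (SNeg a)) a)
| ax_nand : forall a b, prov (Iff (SNeg (And a b)) (Or (SNeg a) (SNeg b)))
| ax_nor : forall a b, prov (Iff (SNeg (Or a b)) (And (SNeg a) (SNeg b)))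
| ax_nimp : forall a b, prov (Iff (SNeg (Imp a b)) (And a (SNeg b)))
| ax_A1 : forall a b c,
    prov (SIff (And (Box a b) (Box a c)) (Box a (And b c)))
| ax_A2 : forall a b c,
    prov (Imp (And (SNeg (Box a b)) (Box a c)) (SNeg (Box a (Or b (SNeg c)))))
| ax_A3 : forall a b c,
    prov (Imp (Imp (Diam a b) (Box a c)) (Box a (Imp b c)))
| ax_A4 : forall a b, prov (Box a (Imp b b))
| r_MP : forall a b, prov (Imp a b) -> prov a -> prov b
| r_RA : forall a b c, prov (SIff a b) -> prov (SIff (Box a c) (Box b c))
| r_RC : forall a b c, prov (Iff a b) -> prov (Iff (Box c a) (Box c b))
| r_RCneg : forall a b c, prov (Iff (SNeg a) (SNeg b)) ->
    prov (Iff (SNeg (Box c a)) (SNeg (Box c b))).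

(* Main.v *)
Require Import Defs.
From Stdlib Require Import FunctionalExtensionality PropExtensionality.

Lemma persist (M : model) : forall phi,
  (forall w w', le M w w' -> ver M phi w -> ver M phi w') /\
  (forall w w', le M w w' -> fal M phi w -> fal M phi w').
Proof.
  induction phi as [p|a IHa b IHb|a IHa b IHb|a IHa b IHb|a IHa|a IHa b IHb];
    simpl; split; intros w w' Hle H.
  - eapply Vp_up; eauto.
  - eapply Vm_up; eauto.
  - destruct H; split; [apply (proj1 IHa) with w|apply (proj1 IHb) with w]; auto.
  - destruct H; [left; apply (proj2 IHa) with w|right; apply (proj2 IHb) with w]; auto.
  - destruct H; [left; apply (proj1 IHa) with w|right; apply (proj1 IHb) with w]; auto.
  - destruct H; split; [apply (proj2 IHa) with w|apply (proj2 IHb) with w]; auto.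
  - intros v Hv Ha. apply H; auto. eapply le_trans; eauto.
  - destruct H; split; [apply (proj1 IHa) with w|apply (proj2 IHb) with w]; auto.
  - apply (proj2 IHa) with w; auto.
  - apply (proj1 IHa) with w; auto.
  - intros v u Hv HR. apply (H v u); auto. eapply le_trans; eauto.
  - destruct H as [u [HR Hb]].
    destruct (R_c1 M _ _ _ _ _ Hle HR) as [v' [Huv HR']].
    exists v'. split; auto. apply (proj2 IHb) with u; auto.
Qed.

Lemma verP M phi w w' : le M w w' -> ver M phi w -> ver M phi w'.
Proof. intros; eapply (proj1 (persist M phi)); eauto. Qed.
Lemma falP M phi w w' : le M w w' -> fal M phi w -> fal M phi w'.
Proof. intros; eapply (proj2 (persist M phi)); eauto. Qed.

Theorem lemma3 : forall phi : form, prov phi -> N4CK_valid phi.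
Proof.
  intros phi Hp; induction Hp; unfold N4CK_valid in *; intros M w; simpl in *.
  - intros v Hv Ha u Hu Hb. eapply verP; eauto.
  - intros v1 H1 f v2 H2 g v3 H3 Ha.
    apply (f v3 (le_trans _ _ _ _ H2 H3) Ha v3 (le_refl _ _)).
    apply g; auto.
  - intros v _ [A B]; auto.
  - intros v _ [A B]; auto.
  - intros v Hv Ha u Hu Hb. split; auto. eapply verP; eauto.
  - intros v _ A; auto.
  - intros v _ A; auto.
  - intros v1 H1 f v2 H2 g v3 H3 [A|B].
    + apply f; auto. eapply le_trans; eauto.
    + apply g; auto.
  - split; intros v _ A; auto.
  - split; intros v _ A; auto.
  - split; intros v _ A; auto.
  - split; intros v _ A; auto.
  - split; split.
    + intros v _ [A B] x u Hx HR. split; [apply (A x u)|apply (B x u)]; auto.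
    + intros v _ [u [HR [A|B]]]; [left|right]; exists u; auto.
    + intros v _ A; split; intros x u Hx HR; destruct (A x u Hx HR); auto.
    + intros v _ [[u [HR A]]|[u [HR A]]]; exists u; auto.
  - intros v _ [[u [HR Hb]] Hc]. exists u. split; auto. split; auto.
    apply (Hc v u); auto. apply le_refl.
  - intros v Hv H x u Hx HR u' Hu' Hb.
    destruct (R_c2 M _ _ _ _ _ HR Hu') as [w' [Hxw' HR']].
    exact (H w' (le_trans _ _ _ _ Hx Hxw') (ex_intro _ u' (conj HR' Hb)) w' u' (le_refl _ _) HR').
  - intros v u _ _ x _ A; auto.
  - apply (IHHp1 M w w (le_refl _ _) (IHHp2 M w)).
  - destruct (IHHp M w) as [[A1 A2] [B1 B2]].
    assert (E1 : ver M a = ver M b).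
    { apply functional_extensionality; intro x.
      destruct (IHHp M x) as [[C1 _] [D1 _]].
      apply propositional_extensionality; split; [apply C1|apply D1]; apply le_refl. }
    assert (E2 : fal M a = fal M b).
    { apply functional_extensionality; intro x.
      destruct (IHHp M x) as [[_ C2] [_ D2]].
      apply propositional_extensionality; split; [apply D2|apply C2]; apply le_refl. }
    rewrite E1, E2.
    split; split; intros v _ X; exact X.
  - split.
    + intros v _ X x u Hx HR. destruct (IHHp M u) as [C D].
      apply C; [apply le_refl|]. eapply X; eauto.
    + intros v _ X x u Hx HR. destruct (IHHp M u) as [C D].
      apply D; [apply le_refl|]. eapply X; eauto.
  - split.
    + intros v _ [u [HR X]]. exists u. split; auto.
      destruct (IHHp M u) as [C D]. apply C; [apply le_refl|auto].
    + intros v _ [u [HR X]]. exists u. split; auto.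
      destruct (IHHp M u) as [C D]. apply D; [apply le_refl|auto].
Qed.
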